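(* Let $\Sigma$ be a non-empty finite or countably infinite alphabet, $p$ a positive Bernoulli distribution on $\Sigma$, $A=(Q,\Sigma,\delta,q_s,F)$ a strongly connected DFA, and $b,\epsilon$ real numbers with $0<b\le1$, $\epsilon>0$. Then $\lim_{n\to\infty}\mu_p(G_n(b,\epsilon))=0$.
   Context: $p:\Sigma\to(0,1]$ with $\sum_ap(a)=1$; $\mu_p(a_1\cdots a_n)=\prod_ip(a_i)$, $\mu_p(W)=\sum_{w\in W}\mu_p(w)$. $A_q$ is $A$ with start state $q$; for $w=w_1\cdots w_n$, $A_q[w]$ is the subsequence of those $w_i$ with $\delta^*(q,w_1\cdots w_{i-1})\in F$; $\#_a(v)$ counts occurrences of $a$ in $v$. Define $G_n(b,\epsilon,q)=\{w\in\Sigma^n: |A_q[w]|>bn\ \text{and}\ \sup_{a\in\Sigma}|\#_a(A_q[w])/|A_q[w]|-p(a)|\ge\epsilon\}$ and $G_n(b,\epsilon)=\bigcup_{q\in Q}G_n(b,\epsilon,q)$. *)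

(* Defs.v *)
From HB Require Import structures.
From mathcomp Require Import all_boot all_order all_algebra.
From mathcomp Require Import all_classical all_reals all_analysis.
Unset Printing Implicit Defensive.
Import Order.TTheory GRing.Theory Num.Theory.
Local Open Scope classical_set_scope.
Local Open Scope ring_scope.

Section Automata.
Variables (Sigma : countType) (Q : finType).

Definition dstar (delta : Q -> Sigma -> Q) (q : Q) (w : seq Sigma) : Q :=
  foldl delta q w.

Definition strongly_connected (delta : Q -> Sigma -> Q) : Prop :=
  forall q q' : Q, exists w : seq Sigma, dstar delta q w = q'.

Fixpoint select (delta : Q -> Sigma -> Q) (F : {set Q}) (q : Q)
    (w : seq Sigma) : seq Sigma :=
  match w with
  | [::] => [::]
  | a :: w' => if q \in F then a :: select delta F (delta q a) w'
               else select delta F (delta q a) w'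
  end.
End Automata.
Arguments dstar {Sigma Q} delta q w.
Arguments strongly_connected {Sigma Q} delta.
Arguments select {Sigma Q} delta F q w.

Section Measure.
Context {R : realType} {Sigma : countType}.

Definition mu_word (p : Sigma -> R) (w : seq Sigma) : R := \prod_(a <- w) p a.

Definition mu_set {n : nat} (p : Sigma -> R) (W : set (n.-tuple Sigma)) : \bar R :=
  (\esum_(w in W) (mu_word p (tval w))%:E)%E.

Definition deviation (p : Sigma -> R) (v : seq Sigma) : R :=
  sup [set `|(count_mem a v)%:R / (size v)%:R - p a| | a in [set: Sigma]].

Definition Gq {Q : finType} (delta : Q -> Sigma -> Q) (F : {set Q})
    (p : Sigma -> R) (n : nat) (b eps : R) (q : Q) : set (n.-tuple Sigma) :=
  [set w | b * n%:R < (size (select delta F q (tval w)))%:R /\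
           eps <= deviation p (select delta F q (tval w))].

Definition G {Q : finType} (delta : Q -> Sigma -> Q) (F : {set Q})
    (p : Sigma -> R) (n : nat) (b eps : R) : set (n.-tuple Sigma) :=
  \bigcup_(q in [set: Q]) Gq delta F p n b eps q.
End Measure.

(* Main.v *)
Require Import Defs.
From HB Require Import structures.
From mathcomp Require Import all_boot all_order all_algebra.
From mathcomp Require Import all_classical all_reals all_analysis.
From mathcomp Require Import ring lra.
Import Order.TTheory GRing.Theory Num.Theory.
Local Open Scope classical_set_scope.
Local Open Scope ring_scope.

Section Comb.
Variables (Sigma : countType) (Q : finType) (delta : Q -> Sigma -> Q) (F : {set Q}).

Lemma select_rcons q w a :
  select delta F q (rcons w a) =
  select delta F q w ++ (if dstar delta q w \in F then [:: a] else [::]).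
Proof.
elim: w q => [|x w IH] q /=; first by case: (q \in F).
by rewrite IH; case: (q \in F).
Qed.

Fixpoint words (T : seq Sigma) n : seq (seq Sigma) :=
  if n is n'.+1 then [seq rcons w a | w <- words T n', a <- T] else [:: [::]].

Lemma mem_words T n w : (w \in words T n) = (size w == n) && all (mem T) w.
Proof.
elim: n w => [|n IH] w /=.
  by rewrite inE; case: w.
case/lastP: w => [|w a]; first by apply/allpairsP => -[[x y] /= [_ _]]; case: x.
rewrite size_rcons eqSS all_rcons.
apply/allpairsP/idP => [[[x y] /= [xin yin /eqP]]|/and3P [h1 h2 h3]].
  rewrite eqseq_rcons => /andP [/eqP -> /eqP ->]; move: xin; rewrite IH.
  by case/andP => -> ->; rewrite yin.
by exists (w, a); split => //=; rewrite IH h1 h3.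
Qed.

Lemma uniq_words T n : uniq T -> uniq (words T n).
Proof.
move=> uT; elim: n => [|n IH] //=.
apply: allpairs_uniq => // -[x y] [x' y'] _ _ /= /eqP.
by rewrite eqseq_rcons => /andP [/eqP -> /eqP ->].
Qed.
End Comb.
Arguments words {Sigma}.

Section Moment.
Variables (R : realType) (Sigma : countType) (Q : finType) (delta : Q -> Sigma -> Q) (F : {set Q}).
Variables (p : Sigma -> R) (hp0 : forall a, 0 <= p a).
Variables (T : seq Sigma) (hT1 : \sum_(a <- T) p a <= 1).

Lemma mu_rcons w a : mu_word p (rcons w a) = mu_word p w * p a.
Proof. by rewrite /mu_word -cats1 big_cat big_seq1. Qed.

Lemma mu_ge0 w : 0 <= mu_word p w.
Proof. by rewrite /mu_word; apply: prodr_ge0. Qed.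

Lemma sum_words_le1 n : \sum_(w <- words T n) mu_word p w <= 1.
Proof.
elim: n => [|n IH] /=; first by rewrite big_seq1 /mu_word big_nil.
rewrite big_allpairs_dep.
apply: le_trans IH; apply: ler_sum => w _.
under eq_bigr do rewrite mu_rcons.
rewrite -mulr_sumr; apply: ler_piMr => //; exact: mu_ge0.
Qed.

Variables (phi : Sigma -> R) (hphi : forall a, phi a ^+ 2 <= 1)
  (hcent : \sum_(a <- T) p a * phi a = 0).

Lemma inner_bound (X : R) : \sum_(a <- T) p a * (X + phi a) ^+ 2 <= X ^+ 2 + 1.
Proof.
have -> : \sum_(a <- T) p a * (X + phi a) ^+ 2 =
   X ^+ 2 * \sum_(a <- T) p a + (2 * X) * \sum_(a <- T) p a * phi a
   + \sum_(a <- T) p a * phi a ^+ 2.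
  rewrite !mulr_sumr -!big_split /=; apply: eq_bigr => a _; ring.
rewrite hcent mulr0 addr0; apply: lerD.
  by apply: ler_piMr => //; exact: sqr_ge0.
apply: le_trans hT1; apply: ler_sum => a _.
by apply: ler_piMr.
Qed.

Definition Xs q w := \sum_(x <- select delta F q w) phi x.

Lemma second_moment q n :
  \sum_(w <- words T n) mu_word p w * Xs q w ^+ 2 <= n%:R.
Proof.
elim: n => [|n IH] /=; first by rewrite big_seq1 /Xs /= big_nil expr0n mulr0.
rewrite big_allpairs_dep.
apply: (@le_trans _ _ (\sum_(w <- words T n) (mu_word p w * Xs q w ^+ 2 + mu_word p w))).
  apply: ler_sum => w _.
  under eq_bigr do rewrite mu_rcons /Xs select_rcons big_cat /=.
  case: (dstar delta q w \in F).
    under eq_bigr do rewrite big_seq1 -mulrA.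
    rewrite -mulr_sumr -[X in _ <= _ + X]mulr1 -mulrDr.
    apply: ler_wpM2l; first exact: mu_ge0.
    exact: inner_bound.
  under eq_bigr do rewrite big_nil addr0 -mulrA.
  rewrite -mulr_sumr -[X in _ <= _ + X]mulr1 -mulrDr.
  apply: ler_wpM2l; first exact: mu_ge0.
  rewrite -mulr_suml; apply: (@le_trans _ _ (Xs q w ^+ 2)); last by rewrite lerDl.
  by apply: ler_piMl => //; exact: sqr_ge0.
rewrite big_split /= -natr1; apply: lerD => //.
exact: sum_words_le1.
Qed.
End Moment.
Arguments Xs {R Sigma Q} delta F phi q w.

Section Cheb.
Variables (R : realType) (Sigma : countType) (Q : finType) (delta : Q -> Sigma -> Q) (F : {set Q}).
Variables (p : Sigma -> R) (hp0 : forall a, 0 <= p a).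
Variables (T : seq Sigma) (hT1 : \sum_(a <- T) p a <= 1).

Lemma sum_count (e : pred Sigma) (r : R) (s : seq Sigma) :
  \sum_(x <- s) ((e x)%:R - r) = (count e s)%:R - r * (size s)%:R.
Proof.
elim: s => [|x s IH]; first by rewrite big_nil mulr0 subr0.
rewrite big_cons IH /= natrD -addn1 natrD; ring.
Qed.

Lemma cheb (phi : Sigma -> R) (hphi : forall a, phi a ^+ 2 <= 1)
  (hcent : \sum_(a <- T) p a * phi a = 0) (q : Q) (K : R) (hK : 0 < K)
  (bad : pred (seq Sigma))
  (hbad : forall w, bad w -> K <= Xs delta F phi q w ^+ 2) n :
  \sum_(w <- words T n | bad w) mu_word p w <= n%:R / K.
Proof.
apply: (@le_trans _ _ (\sum_(w <- words T n) mu_word p w * Xs delta F phi q w ^+ 2 / K)).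
  rewrite [X in _ <= X](bigID bad) /= -[X in X <= _]addr0; apply: lerD.
    apply: ler_sum => w /hbad hw.
    rewrite -mulrA -[X in X <= _]mulr1; apply: ler_wpM2l; first exact: mu_ge0.
    by rewrite ler_pdivlMr // mul1r.
  apply: sumr_ge0 => w _; apply: divr_ge0; last exact: ltW.
  by apply: mulr_ge0; [exact: mu_ge0 | exact: sqr_ge0].
rewrite -mulr_suml; apply: ler_wpM2r; first by rewrite invr_ge0 ltW.
exact: second_moment.
Qed.

Variables (b e0 : R) (hb : 0 < b) (he0 : 0 < e0).
Variables (e : pred Sigma) (P : R).
Let s := \sum_(a <- T) p a.
Let r := (\sum_(a <- T) p a * (e a)%:R) / s.
Hypothesis (hs : 0 < s) (hr : `|r - P| <= e0 / 2).

Definition bad_ev (q : Q) (n : nat) (w : seq Sigma) :=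
  let v := select delta F q w in
  (b * n%:R < (size v)%:R) && (e0 <= `|(count e v)%:R / (size v)%:R - P|).

Lemma event_bound q n : (0 < n)%N ->
  \sum_(w <- words T n | bad_ev q n w) mu_word p w <= 4 / (b ^+ 2 * e0 ^+ 2 * n%:R).
Proof.
move=> n0.
have r0 : 0 <= r by apply: divr_ge0; [apply: sumr_ge0 => a _; apply: mulr_ge0 | exact: ltW].
have r1 : r <= 1.
  rewrite ler_pdivrMr // mul1r; apply: ler_sum => a _.
  by apply: ler_piMr => //; case: (e a).
have hphi a : ((e a)%:R - r) ^+ 2 <= 1.
  by case: (e a) => /=; rewrite ?subr0; nra.
have hcent : \sum_(a <- T) p a * ((e a)%:R - r) = 0.
  under eq_bigr do rewrite mulrBr.
  rewrite sumrB -mulr_suml -/s /r mulrC divfK ?subrr //; exact: lt0r_neq0.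
have nR : 0 < (n%:R : R) by rewrite ltr0n.
pose K := (b * n%:R * e0 / 2) ^+ 2.
have hK : 0 < K by rewrite exprn_gt0 // !mulr_gt0 // invr_gt0.
apply: le_trans; first apply: (@cheb (fun a => (e a)%:R - r) hphi hcent q K hK (bad_ev q n)).
  move=> w /andP [hM hdev].
  rewrite /Xs sum_count.
  set M := (size _)%:R in hM hdev *; set c := (count _ _)%:R in hdev *.
  have M0 : 0 < M by apply: lt_trans hM; apply: mulr_gt0.
  have hd : e0 / 2 <= `|c / M - r|.
    have := ler_distD r (c / M) P. move: hr. move=> hr' hh. lra.
  have -> : c - r * M = M * (c / M - r) by rewrite mulrBr mulrCA divff ?mulr1 ?(gt_eqF M0) // mulrC.
  rewrite exprMn.
  set u := c / M - r in hd *.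
  have u2 : (e0 / 2) ^+ 2 <= u ^+ 2.
    have h2 : 0 <= e0 / 2 by apply: divr_ge0 (ltW he0) (ler0n _ 2).
    rewrite -[u ^+ 2]real_normK ?num_real // !expr2; apply: ler_pM => //.
  have bn0 : 0 <= b * n%:R by apply: mulr_ge0; [exact: ltW | exact: ltW].
  have hbM : (b * n%:R) ^+ 2 <= M ^+ 2 by rewrite !expr2; apply: ler_pM => //; exact: ltW.
  rewrite /K -mulrA exprMn. apply: ler_pM => //; exact: sqr_ge0.
rewrite /K le_eqVlt; apply/orP; left; apply/eqP.
field; rewrite ?mulf_neq0 ?(gt_eqF nR) ?(gt_eqF hb) ?(gt_eqF he0) ?expf_neq0 //.
Qed.
End Cheb.

Lemma sub_sum_le (R : realType) (T : eqType) (s1 s2 : seq T) (f : T -> R) :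
  uniq s1 -> uniq s2 -> {subset s1 <= s2} -> (forall x, 0 <= f x) ->
  \sum_(x <- s1) f x <= \sum_(x <- s2) f x.
Proof.
move=> u1 u2 s12 f0.
rewrite [X in _ <= X](bigID (fun x => x \in s1)) /= -[X in X <= _]addr0; apply: lerD; last first.
  by apply: sumr_ge0.
have pe : perm_eq [seq x <- s2 | x \in s1] s1.
  apply: uniq_perm => //; first exact: filter_uniq.
  by move=> x; rewrite mem_filter; case: (boolP (x \in s1)) => // /s12 ->.
by rewrite -(perm_big _ pe) big_filter.
Qed.

Lemma sum_in_sub (R : realType) (T : eqType) (s1 s2 : seq T) (f : T -> R) :
  uniq s1 -> uniq s2 -> {subset s1 <= s2} ->
  \sum_(x <- s2 | x \in s1) f x = \sum_(x <- s1) f x.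
Proof.
move=> u1 u2 s12.
have pe : perm_eq [seq x <- s2 | x \in s1] s1.
  apply: uniq_perm => //; first exact: filter_uniq.
  by move=> x; rewrite mem_filter; case: (boolP (x \in s1)) => // /s12 ->.
by rewrite -(perm_big _ pe) big_filter.
Qed.

Arguments bad_ev {R Sigma Q}.
Arguments mu_ge0 {R Sigma p}.
Arguments event_bound {R Sigma Q delta F p} hp0 {T} hT1 {b e0} hb he0 {e P} hs hr q {n}.

Section Main.
Variables (R : realType) (Sigma : countType) (hne : inhabited Sigma)
  (p : Sigma -> R) (hp_pos : forall a, 0 < p a)
  (hp_sum : (\esum_(a in [set: Sigma]) (p a)%:E = 1)%E)
  (Q : finType) (delta : Q -> Sigma -> Q) (F : {set Q})
  (b eps : R) (hb0 : 0 < b) (heps : 0 < eps).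

Lemma hp0 a : 0 <= p a. Proof. exact: ltW. Qed.

Lemma psum_le1 (S : seq Sigma) : uniq S -> \sum_(a <- S) p a <= 1.
Proof.
move=> uS; rewrite -lee_fin -hp_sum; apply: esum_ge.
exists [set` S]; first by split; [exact: finite_seq | by []].
by rewrite -fsbig_seq // sumEFin.
Qed.

Lemma exists_S (d : R) : 0 < d -> exists S : seq Sigma, uniq S /\ 1 - d < \sum_(a <- S) p a.
Proof.
move=> d0.
have : ((1 - d)%:E < \esum_(a in [set: Sigma]) (p a)%:E)%E by rewrite hp_sum lte_fin; lra.
rewrite /esum; case/ereal_sup_gt => _ [X [finX _] <-].
rewrite fsbig_finite // sumEFin lte_fin => h.
by exists (finmap.enum_fset (fset_set X)); split => //; exact: finmap.fset_uniq.
Qed.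

Definition ev (S : seq Sigma) (E : option Sigma) : pred Sigma :=
  fun x => if E is Some a then x == a else x \notin S.
Definition evP (S : seq Sigma) (E : option Sigma) : R :=
  if E is Some a then p a else 1 - \sum_(x <- S) p x.

Lemma cover (S : seq Sigma) (d : R) (hd : 8 * d <= eps) (uS : uniq S)
  (hS : 1 - d < \sum_(a <- S) p a)
  (n : nat) (v : seq Sigma) (hM : b * n%:R < (size v)%:R) (hdev : eps <= deviation p v) :
  exists2 E, E \in None :: map Some S &
    eps / 4 <= `|(count (ev S E) v)%:R / (size v)%:R - evP S E|.
Proof.
have he := heps; have hb := hb0.
have : eps / 2 < deviation p v by lra.
case/sup_gt => [|y [a _ <-] hy].
  by case: hne => a0; eexists; exists a0.
have M0 : 0 < ((size v)%:R : R).
  by apply: le_lt_trans hM; apply: mulr_ge0; [exact: ltW|exact: ler0n].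
case: (boolP (a \in S)) => aS.
  exists (Some a); first by rewrite inE map_f ?orbT.
  have -> : count (ev S (Some a)) v = count_mem a v by apply: eq_count.
  rewrite /evP; lra.
exists None; first exact: mem_head.
have pa : p a <= 1 - \sum_(x <- S) p x.
  have := psum_le1 (a :: S); rewrite big_cons /= aS uS => /(_ isT); lra.
have hS1 := psum_le1 S uS.
have hsub : (count_mem a v <= count (ev S None) v)%N.
  by apply: sub_count => x /eqP ->.
have hca : (count_mem a v)%:R / (size v)%:R <= (count (ev S None) v)%:R / (size v)%:R :> R.
  by apply: ler_wpM2r; [rewrite invr_ge0 ltW | rewrite ler_nat].
have ca0 : 0 <= (count_mem a v)%:R / (size v)%:R :> R by apply: divr_ge0; [exact: ler0n|exact: ltW].
have hpa := hp0 a.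
move: hy; rewrite ltr_normr => /orP [hy|hy]; last by lra.
rewrite /evP ler_normr; apply/orP; left; lra.
Qed.

Lemma close (S T : seq Sigma) (d : R) (hd : 16 * d <= eps) (hd1 : 16 * d <= 1)
  (uS : uniq S) (uT : uniq T)
  (sST : {subset S <= T}) (hS : 1 - d < \sum_(a <- S) p a) E (hE : E \in None :: map Some S) :
  `|(\sum_(a <- T) p a * (ev S E a)%:R) / (\sum_(a <- T) p a) - evP S E| <= eps / 4 / 2.
Proof.
have he := heps.
have hT1 := psum_le1 T uT.
have hST : \sum_(a <- S) p a <= \sum_(a <- T) p a by apply: sub_sum_le => //; exact: hp0.
suff : - d <= (\sum_(a <- T) p a * (ev S E a)%:R) / (\sum_(a <- T) p a) - evP S E <= d.
  move=> /andP [h1 h2]; rewrite ler_norml; apply/andP; split; lra.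
case: E hE => [a|] hE.
  have aS : a \in S by move: hE; rewrite inE /= => /mapP [x xS [->]].
  have -> : \sum_(x <- T) p x * (ev S (Some a) x)%:R = p a.
    rewrite (bigD1_seq a) //= ?sST // eqxx mulr1 big1 ?addr0 //.
    by move=> x /negbTE ->; rewrite mulr0.
  have pa : p a <= \sum_(a <- S) p a.
    rewrite (bigD1_seq a) //= -[X in X <= _]addr0; apply: lerD => //.
    by apply: sumr_ge0 => x _; exact: hp0.
  rewrite /evP.
  move: hT1 hST pa hS; move: (\sum_(a <- T) p a) (\sum_(a <- S) p a) => s sig hT1 hST pa hS.
  have s0 : 0 < s by lra.
  have t1 : p a / s <= 1 by rewrite ler_pdivrMr // mul1r; lra.
  have t0 : 0 <= p a / s by rewrite divr_ge0 // ?ltW //; exact: hp0.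
  move: t1 t0; have -> : p a = p a / s * s by rewrite divfK // gt_eqF.
  rewrite mulfK ?gt_eqF //.
  move: (p a / s) => t t1 t0.
  apply/andP; split; nra.
have -> : \sum_(x <- T) p x * (ev S None x)%:R = \sum_(a <- T) p a - \sum_(a <- S) p a.
  rewrite [X in _ = X - _](bigID (fun x => x \in S)) /= sum_in_sub //.
  rewrite [X in X = _](bigID (fun x => x \in S)) /=.
  rewrite big1; last by move=> x ->; rewrite mulr0.
  rewrite add0r [in RHS]addrAC subrr add0r; apply: eq_bigr => x /negbTE; rewrite /ev => ->; by rewrite mulr1.
rewrite /evP.
move: hT1 hST hS; move: (\sum_(a <- T) p a) (\sum_(a <- S) p a) => s sig hT1 hST hS.
have s0 : 0 < s by lra.
have t1 : sig / s <= 1 by rewrite ler_pdivrMr // mul1r; lra.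
have t0 : 0 <= sig / s by rewrite divr_ge0 //; [lra | exact: ltW].
have -> : (s - sig) / s = 1 - sig / s by rewrite mulrBl divff ?gt_eqF.
move: t1 t0 hST hS; have -> : sig = sig / s * s by rewrite divfK // gt_eqF.
rewrite mulfK ?gt_eqF //.
move: (sig / s) => t t1 t0 hST hS.
apply/andP; split; nra.
Qed.

Definition evs (S : seq Sigma) : seq (option Sigma) := None :: map Some S.

Lemma uniq_evs S : uniq S -> uniq (evs S).
Proof.
move=> uS; rewrite /evs /= (map_inj_uniq (@Some_inj _)) uS andbT.
by apply/mapP => -[x _].
Qed.

Definition Cst (S : seq Sigma) : R :=
  \sum_(q : Q) \sum_(E <- evs S) 4 / (b ^+ 2 * (eps / 4) ^+ 2).

Lemma Cst_ge0 S : 0 <= Cst S.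
Proof.
have hb := hb0; have he := heps.
apply: sumr_ge0 => q _; apply: sumr_ge0 => E _.
apply: divr_ge0 => //; apply: mulr_ge0; exact: sqr_ge0.
Qed.

Definition badw (S : seq Sigma) (q : Q) (n : nat) (E : option Sigma) (v : seq Sigma) : R :=
  if bad_ev delta F b (eps / 4) (ev S E) (evP S E) q n v then mu_word p v else 0.

Lemma badw_ge0 S q n E v : 0 <= badw S q n E v.
Proof. by rewrite /badw; case: ifP => _ //; exact: (mu_ge0 hp0). Qed.

Lemma finite_bound (S : seq Sigma) (d : R) (hd : 16 * d <= eps) (hd1 : 16 * d <= 1)
  (uS : uniq S) (hS : 1 - d < \sum_(a <- S) p a) (n : nat) (n0 : (0 < n)%N)
  (A : seq (n.-tuple Sigma)) (uA : uniq A)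
  (hA : forall w, w \in A -> G delta F p n b eps w) :
  \sum_(w <- A) mu_word p (tval w) <= Cst S / n%:R.
Proof.
have hb := hb0; have he := heps.
pose T := undup (S ++ flatten (map (fun w : n.-tuple Sigma => tval w) A)).
have uT : uniq T := undup_uniq _.
have sST : {subset S <= T} by move=> x xS; rewrite mem_undup mem_cat xS.
have hT1 := psum_le1 T uT.
have hST : \sum_(a <- S) p a <= \sum_(a <- T) p a by apply: sub_sum_le => //; exact: hp0.
have hs : 0 < \sum_(a <- T) p a by lra.
have he4 : 0 < eps / 4 by lra.
apply: (@le_trans _ _ (\sum_(w <- A) \sum_(q : Q) \sum_(E <- evs S) badw S q n E (tval w))).
  rewrite [X in X <= _]big_seq [X in _ <= X]big_seq; apply: ler_sum => w wA.
  case: (hA w wA) => q _ [hM hdev].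
  have hd8 : 8 * d <= eps by lra.
  have [E hE habs] := @cover S d hd8 uS hS _ _ hM hdev.
  rewrite (bigD1 q) //= (bigD1_seq E hE (uniq_evs S uS)) /=.
  rewrite {1}/badw /bad_ev /= hM habs /=.
  rewrite -addrA -[X in X <= _]addr0; apply: lerD => //.
  apply: addr_ge0; apply: sumr_ge0 => ? _; try apply: sumr_ge0 => ? _;
    exact: badw_ge0.
rewrite exchange_big /= /Cst mulr_suml; apply: ler_sum => q _.
rewrite exchange_big /= mulr_suml [X in X <= _]big_seq [X in _ <= X]big_seq; apply: ler_sum => E hE.
apply: (@le_trans _ _ (\sum_(v <- words T n | bad_ev delta F b (eps / 4) (ev S E) (evP S E) q n v) mu_word p v)).
  rewrite [X in _ <= X]big_mkcond /=.
  rewrite -(big_map (fun w : n.-tuple Sigma => tval w) xpredT (badw S q n E)).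
  apply: sub_sum_le.
  - rewrite map_inj_uniq //; exact: val_inj.
  - exact: uniq_words.
  - move=> v /mapP [w wA ->]; rewrite mem_words size_tuple eqxx /=.
    apply/allP => x xw; rewrite /= /T mem_undup mem_cat; apply/orP; right.
    by apply/flattenP; exists (tval w) => //; exact: map_f.
  - exact: badw_ge0.
have hr := @close S T d hd hd1 uS uT sST hS _ hE.
apply: le_trans (event_bound hp0 hT1 hb he4 hs hr q n0) _.
by rewrite invfM mulrA.
Qed.

Lemma mu_bound S d (hd : 16 * d <= eps) (hd1 : 16 * d <= 1) (uS : uniq S)
  (hS : 1 - d < \sum_(a <- S) p a) n :
  (0 < n)%N -> (mu_set p (G delta F p n b eps) <= (Cst S / n%:R)%:E)%E.
Proof.
move=> n0; rewrite /mu_set /esum; apply: ge_ereal_sup => _ [X [finX XG] <-].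
rewrite fsbig_finite // sumEFin lee_fin.
apply: (@finite_bound S d hd hd1 uS hS _ n0); first exact: finmap.fset_uniq.
by move=> w; rewrite in_fset_set // => /set_mem; exact: XG.
Qed.

Lemma main_cvg : (fun n : nat => mu_set p (G delta F p n b eps)) @ \oo --> 0%E.
Proof.
have he := heps.
have [d [d0 [hd hd1]]] : exists d : R, 0 < d /\ 16 * d <= eps /\ 16 * d <= 1.
  have e1 : 0 < 1 + eps by lra.
  exists (eps / (16 * (1 + eps))).
  have -> : 16 * (eps / (16 * (1 + eps))) = eps / (1 + eps).
    by field; rewrite gt_eqF.
  split; first by apply: divr_gt0 => //; apply: mulr_gt0.
  by rewrite !ler_pdivrMr //; split; nra.
have [S [uS hS]] := @exists_S d d0.
have C0 := Cst_ge0 S.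
apply: (@squeeze_cvge _ _ _ _ (fun=> 0%E) _ (fun n => ((2 * Cst S) * harmonic n)%:E)).
- apply: nearW => n; apply/andP; split.
    by apply: esum_ge0 => w _; rewrite lee_fin; exact: (mu_ge0 hp0).
  case: n => [|n].
    have -> : G delta F p 0 b eps = set0.
      apply/seteqP; split => // w [q _ [hM _]].
      by move: hM; rewrite (size0nil (size_tuple w)) /= mulr0 ltxx.
    rewrite /mu_set esum_set0 lee_fin /=.
    by apply: mulr_ge0 => //; apply: mulr_ge0.
  apply: le_trans (@mu_bound S d hd hd1 uS hS _ (ltn0Sn n)) _.
  rewrite lee_fin /=.
  have -> : (n.+2)%:R = (n.+1)%:R + 1 :> R by rewrite natr1.
  have x1 : 1 <= (n.+1)%:R :> R by rewrite ler1n.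
  move: x1; move: (n.+1)%:R => x x1.
  rewrite ler_pdivrMr; last by lra.
  rewrite mulrAC ler_pdivlMr; last by lra.
  nra.
- exact: cvg_cst.
- apply: cvg_EFin; first exact: nearW.
  have := cvgMl_tmp (a := 2 * Cst S) (@cvg_harmonic R).
  by rewrite mulr0; apply; exact: nbhs_filter.
Qed.

End Main.

Theorem corollary5p6 (R : realType) (Sigma : countType) (hne : inhabited Sigma)
    (p : Sigma -> R) (hp_pos : forall a, 0 < p a)
    (hp_sum : (\esum_(a in [set: Sigma]) (p a)%:E = 1)%E)
    (Q : finType) (delta : Q -> Sigma -> Q) (q_s : Q) (F : {set Q})
    (hsc : strongly_connected delta)
    (b eps : R) (hb0 : 0 < b) (hb1 : b <= 1) (heps : 0 < eps) :
  (fun n : nat => mu_set p (G delta F p n b eps)) @ \oo --> 0%E.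
Proof. exact: main_cvg. Qed.
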